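(* Let $n\ge 3$. The maps $A,B,C,D,E$ defined below are injective, their images are faces of $\Delta_{n+1}$, and the set of faces of $\Delta_{n+1}$ is the disjoint union of the images of $A$, $B$, $C$, $D$, $E$. Moreover, for each fixed $i\in\{2,\dots,n\}$, the image $\{E(F,i):F\in\Delta_n\}$ equals the set of faces of $\Delta_{n+1}$ containing the vertex $\{i,n+1\}$, it is isomorphic as a poset (under inclusion) to the face poset of $\Delta_n$, and it is an upper order ideal in the face poset of $\Delta_{n+1}$.
   Context: The Whitehouse complex $\Delta_n$ ($n\ge 3$) is the simplicial complex with vertex set $V_n=\{S\subseteq\{2,\dots,n\}: 2\le |S|\le n-2\}$, in which a subset $F\subseteq V_n$ is a face iff for all $S,T\in F$ one has $S\subseteq T$, $T\subseteq S$, or $S\cap T=\emptyset$. (So $\Delta_3=\{\emptyset\}$.) Its face poset is the set of its faces (including $\emptyset$) ordered by inclusion. For a face $F$ of $\Delta_n$ define: $A(F)=F$; $B(F)=F\cup\{\{2,\dots,n\}\}$; for $S\in F$, $C(F,S)=\{T\cup\{n+1\}: T\in F, S\subseteq T\}\cup\{T: T\in F, S\not\subseteq T\}$ and $D(F,S)=C(F,S)\cup\{S\}$; for $2\le i\le n$, $E(F,i)=\{\{i,n+1\}\}\cup\{T\cup\{n+1\}: T\in F, i\in T\}\cup\{T: T\in F, i\notin T\}$. Here $A,B$ have domain the faces of $\Delta_n$, $C,D$ have domain the pairs $(F,S)$ with $F$ a face and $S\in F$, and $E$ has domain the pairs $(F,i)$ with $F$ a face and $2\le i\le n$. *)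

(* Defs.v *)
(* Vertices of Delta_m are represented as finite sets of
   ordinals 'I_N (N large enough, in practice N = n.+2 so that both Delta_n
   and Delta_{n+1} live in the same type), faces as finite sets of vertices. *)
From mathcomp Require Import all_boot.
Set Implicit Arguments. Unset Strict Implicit. Unset Printing Implicit Defensive.

Definition wvert (m N : nat) (S : {set 'I_N}) : bool :=
  [forall x in S, 2 <= x <= m] && (2 <= #|S| <= m - 2).

Definition wcompat (N : nat) (S T : {set 'I_N}) : bool :=
  [|| S \subset T, T \subset S | [disjoint S & T]].

Definition wface (m N : nat) (F : {set {set 'I_N}}) : bool :=
  [forall S in F, wvert m S] && [forall S in F, forall T in F, wcompat S T].

(* The maps A,B,C,D,E from faces of Delta_n to faces of Delta_{n+1};
   the element n+1 is ord_max : 'I_n.+2. *)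
Definition mapA (n : nat) (F : {set {set 'I_n.+2}}) : {set {set 'I_n.+2}} := F.

Definition mapB (n : nat) (F : {set {set 'I_n.+2}}) : {set {set 'I_n.+2}} :=
  F :|: [set [set x : 'I_n.+2 | 2 <= x <= n]].

Definition mapC (n : nat) (F : {set {set 'I_n.+2}}) (S : {set 'I_n.+2})
  : {set {set 'I_n.+2}} :=
  [set T :|: [set ord_max] | T in F & S \subset T]
  :|: [set T in F | ~~ (S \subset T)].

Definition mapD (n : nat) (F : {set {set 'I_n.+2}}) (S : {set 'I_n.+2})
  : {set {set 'I_n.+2}} :=
  mapC F S :|: [set S].

Definition mapE (n : nat) (F : {set {set 'I_n.+2}}) (i : 'I_n.+2)
  : {set {set 'I_n.+2}} :=
  [set [set i; ord_max]]
  :|: [set T :|: [set ord_max] | T in F & i \in T]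
  :|: [set T in F | i \notin T].

Inductive label := LA | LB | LC | LD | LE.

Definition inImage (n : nat) (l : label) (G : {set {set 'I_n.+2}}) : Prop :=
  match l with
  | LA => exists F, wface n F /\ G = mapA F
  | LB => exists F, wface n F /\ G = mapB F
  | LC => exists F S, [/\ wface n F, S \in F & G = mapC F S]
  | LD => exists F S, [/\ wface n F, S \in F & G = mapD F S]
  | LE => exists F (i : 'I_n.+2), [/\ wface n F, 2 <= i <= n & G = mapE F i]
  end.

Definition imgE (n : nat) (i : 'I_n.+2) (G : {set {set 'I_n.+2}}) : Prop :=
  exists F, wface n F /\ G = mapE F i.

(* Main.v *)
Require Import Defs.
From mathcomp Require Import all_boot zify.
Set Implicit Arguments. Unset Strict Implicit. Unset Printing Implicit Defensive.

Lemma cardV m N : m < N -> #|[set x : 'I_N | 2 <= x <= m]| = m.-1.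
Proof.
elim: m => [|m IH] lt.
  apply/eqP; rewrite cards_eq0; apply/eqP/setP => x; rewrite !inE; lia.
case: m IH lt => [|m] IH lt.
  apply/eqP; rewrite cards_eq0; apply/eqP/setP => x; rewrite !inE; lia.
have -> : [set x : 'I_N | 2 <= x <= m.+2] = (Ordinal lt) |: [set x : 'I_N | 2 <= x <= m.+1].
  apply/setP => x; rewrite !inE -val_eqE /=; lia.
rewrite cardsU1 IH; last by lia.
rewrite inE /=; lia.
Qed.

Lemma wvertP m N (S : {set 'I_N}) :
  reflect ((forall x, x \in S -> 2 <= x <= m) /\ 2 <= #|S| <= m - 2) (wvert m S).
Proof.
apply: (iffP andP) => [[/forallP H1 H2]|[H1 H2]]; split => //.
- by move=> x xS; have := H1 x; rewrite xS.
- by apply/forallP => x; apply/implyP; apply: H1.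
Qed.

Lemma wfaceP m N (F : {set {set 'I_N}}) :
  reflect ((forall S, S \in F -> wvert m S) /\ (forall S T, S \in F -> T \in F -> wcompat S T)) (wface m F).
Proof.
apply: (iffP andP) => [[/forallP H1 /forallP H2]|[H1 H2]]; split.
- by move=> S SF; have := H1 S; rewrite SF.
- move=> S T SF TF; have := H2 S; rewrite SF /= => /forallP /(_ T); by rewrite TF.
- by apply/forallP => S; apply/implyP; apply: H1.
- apply/forallP => S; apply/implyP => SF; apply/forallP => T; apply/implyP => TF; exact: H2.
Qed.

Lemma wcompatC N (S T : {set 'I_N}) : wcompat S T = wcompat T S.
Proof. by rewrite /wcompat disjoint_sym; case: (S \subset T); case: (T \subset S). Qed.

Lemma wcompatD N (S T : {set 'I_N}) a : wcompat S T -> wcompat (S :\ a) (T :\ a).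
Proof.
case/or3P => H; apply/or3P.
- by apply: Or31; apply: setSD.
- by apply: Or32; apply: setSD.
- apply: Or33; move: H; rewrite !disjoints_subset => H.
  apply: subset_trans (subsetDl _ _) _; apply: subset_trans H _; by rewrite setCS subsetDl.
Qed.

Lemma wcompat_UU N (S T : {set 'I_N}) a : wcompat S T -> ~~ [disjoint S & T] ->
  wcompat (S :|: [set a]) (T :|: [set a]).
Proof.
case/or3P => H nd; apply/or3P.
- by apply: Or31; apply: setSU.
- by apply: Or32; apply: setSU.
- by rewrite H in nd.
Qed.

Lemma wcompat_Ul N (S T : {set 'I_N}) a : a \notin T -> wcompat S T -> ~~ (S \subset T) ->
  wcompat (S :|: [set a]) T.
Proof.
move=> aT; case/or3P => H nd; apply/or3P.
- by rewrite H in nd.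
- by apply: Or32; apply: subsetU; rewrite H.
- apply: Or33; move: H; rewrite !disjoints_subset subUset => ->; by rewrite sub1set inE.
Qed.

Section Main.
Variable n : nat.
Hypothesis hn : 3 <= n.
Local Notation mx := (@ord_max n.+1).
Local Notation V0 := [set x : 'I_n.+2 | 2 <= x <= n].
Local Notation vset := {set 'I_n.+2}.

Lemma cardV0 : #|V0| = n.-1.
Proof. by apply: cardV. Qed.

Lemma vert_nomx (T : vset) : wvert n T -> mx \notin T.
Proof. by case/wvertP => H _; apply/negP => /H /=; lia. Qed.

Lemma vert_sub (T : vset) : wvert n T -> T \subset V0.
Proof. by case/wvertP => H _; apply/subsetP => x /H; rewrite inE. Qed.

Lemma vert_up (T : vset) : wvert n T -> wvert n.+1 T.
Proof. case/wvertP => H1 H2; apply/wvertP; split; last by lia.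
by move=> x /H1; lia. Qed.

Lemma vert_upmx (T : vset) : wvert n T -> wvert n.+1 (T :|: [set mx]).
Proof.
move=> wT; have nT := vert_nomx wT; case/wvertP: wT => H1 H2; apply/wvertP; split.
  move=> x; rewrite !inE => /orP [/H1|/eqP ->] /=; lia.
by rewrite setUC cardsU1 nT; lia.
Qed.

Lemma addK (T : vset) : mx \notin T -> (T :|: [set mx]) :\ mx = T.
Proof. by move=> nT; rewrite setUC setU1K. Qed.

Lemma delK (T : vset) : mx \in T -> (T :\ mx) :|: [set mx] = T.
Proof. by move=> mT; rewrite setUC setD1K. Qed.

Lemma vert_ne0 m (T : vset) : wvert m T -> ~~ [disjoint T & T].
Proof. case/wvertP => _ H; rewrite -setI_eq0 setIid -card_gt0; lia. Qed.

Lemma faceA (F : {set vset}) : wface n F -> wface n.+1 (mapA F).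
Proof.
case/wfaceP => H1 H2; apply/wfaceP; split => //.
by move=> S /H1 /vert_up.
Qed.

Lemma V0vert : wvert n.+1 V0.
Proof. apply/wvertP; split; first by move=> x; rewrite inE; lia.
rewrite cardV0; lia. Qed.

Lemma V0notin (F : {set vset}) : wface n F -> V0 \notin F.
Proof. case/wfaceP => H1 _; apply/negP => /H1 /wvertP [_]; rewrite cardV0; lia. Qed.

Lemma faceB (F : {set vset}) : wface n F -> wface n.+1 (mapB F).
Proof.
case/wfaceP => H1 H2; apply/wfaceP; split.
  move=> S; rewrite inE => /orP [/H1 /vert_up //|]; rewrite inE => /eqP ->; exact: V0vert.
have cV S : S \in F -> wcompat S V0 by move=> /H1 /vert_sub sS; rewrite /wcompat sS.
move=> S T; rewrite !inE => /orP [SF|/eqP ->] /orP [TF|/eqP ->].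
- exact: H2.
- exact: cV.
- by rewrite wcompatC; apply: cV.
- by rewrite /wcompat subxx.
Qed.

Lemma memC (F : {set vset}) (S : vset) x : x \in mapC F S ->
  (exists2 T, [/\ T \in F & S \subset T] & x = T :|: [set mx]) \/ (x \in F /\ ~~ (S \subset x)).
Proof.
rewrite !inE => /orP [/imsetP [T] |/andP [? ?]]; last by right.
by rewrite inE => /andP [? ?] ->; left; exists T.
Qed.

Lemma memCI (F : {set vset}) (S : vset) T : T \in F -> S \subset T -> T :|: [set mx] \in mapC F S.
Proof. by move=> TF ST; rewrite !inE; apply/orP; left; apply/imsetP; exists T; rewrite // inE TF. Qed.

Lemma memCI2 (F : {set vset}) (S : vset) T : T \in F -> ~~ (S \subset T) -> T \in mapC F S.
Proof. by move=> TF ST; rewrite !inE TF ST orbT. Qed.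

Lemma faceC (F : {set vset}) (S : vset) : wface n F -> S \in F -> wface n.+1 (mapC F S).
Proof.
move=> wF SF; case/wfaceP: (wF) => H1 H2; apply/wfaceP; split.
  by move=> x /memC [[T [TF _] ->]|[/H1 /vert_up]] //; apply: vert_upmx; apply: H1.
have nd T1 T2 : T1 \in F -> T2 \in F -> S \subset T1 -> S \subset T2 -> ~~ [disjoint T1 & T2].
  move=> _ _ s1 s2; apply/negP => dj; have := vert_ne0 (H1 _ SF); apply/negP/negPn.
  by rewrite disjoints_subset; apply: subset_trans s1 _; rewrite -disjoints_subset; apply: disjointWr dj.
have mixed T1 T2 : T1 \in F -> T2 \in F -> S \subset T1 -> ~~ (S \subset T2) ->
    wcompat (T1 :|: [set mx]) T2.
  move=> t1 t2 s1 s2; apply: wcompat_Ul; first exact: vert_nomx (H1 _ t2).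
    exact: H2.
  by apply/negP => sub; rewrite (subset_trans s1 sub) in s2.
move=> x y /memC [[T1 [t1 s1] ->]|[t1 s1]] /memC [[T2 [t2 s2] ->]|[t2 s2]].
- by apply: wcompat_UU; [apply: H2|apply: nd].
- exact: mixed.
- by rewrite wcompatC; apply: mixed.
- exact: H2.
Qed.

Lemma faceD (F : {set vset}) (S : vset) : wface n F -> S \in F -> wface n.+1 (mapD F S).
Proof.
move=> wF SF; have wC := faceC wF SF; case/wfaceP: (wF) => H1 H2.
case/wfaceP: wC => C1 C2; apply/wfaceP; split.
  by move=> x; rewrite inE => /orP [/C1|]//; rewrite inE => /eqP ->; apply: vert_up; apply: H1.
have cS y : y \in mapC F S -> wcompat S y.
  case/memC => [[T [TF ST] ->]|[yF _]]; last exact: H2.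
  by rewrite /wcompat subsetU ?ST.
move=> x y; rewrite /mapD => /setUP [xC|/set1P ->] /setUP [yC|/set1P ->].
- exact: C2.
- by rewrite wcompatC; apply: cS.
- exact: cS.
- by rewrite /wcompat subxx.
Qed.

Lemma memE (F : {set vset}) (i : 'I_n.+2) x : x \in mapE F i ->
  [\/ x = [set i; mx], (exists2 T, [/\ T \in F & i \in T] & x = T :|: [set mx]) | (x \in F /\ i \notin x)].
Proof.
rewrite !inE => /orP [/orP [/eqP ->|/imsetP [T]]|/andP [? ?]]; [by apply: Or31| |by apply: Or33].
by rewrite inE => /andP [? ?] ->; apply: Or32; exists T.
Qed.

Lemma memEI0 (F : {set vset}) (i : 'I_n.+2) : [set i; mx] \in mapE F i.
Proof. by rewrite !inE eqxx. Qed.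

Lemma memEI (F : {set vset}) (i : 'I_n.+2) T : T \in F -> i \in T -> T :|: [set mx] \in mapE F i.
Proof. by move=> TF iT; rewrite !inE; apply/orP; left; apply/orP; right; apply/imsetP; exists T; rewrite // inE TF. Qed.

Lemma memEI2 (F : {set vset}) (i : 'I_n.+2) T : T \in F -> i \notin T -> T \in mapE F i.
Proof. by move=> TF iT; rewrite !inE TF iT orbT. Qed.

Lemma faceE (F : {set vset}) (i : 'I_n.+2) : wface n F -> 2 <= i <= n -> wface n.+1 (mapE F i).
Proof.
move=> wF hi; case/wfaceP: (wF) => H1 H2; apply/wfaceP; split.
  move=> x /memE [->|[T [TF _] ->]|[/H1 /vert_up]] //; last by apply: vert_upmx; apply: H1.
  apply/wvertP; split; first by move=> z; rewrite !inE => /orP [] /eqP -> /=; lia.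
  rewrite cards2; have -> : (i != mx) by rewrite -val_eqE /=; lia.
  simpl; lia.
have c0 y : y \in mapE F i -> wcompat [set i; mx] y.
  case/memE => [->|[T [TF iT] ->]|[yF iy]]; first by rewrite /wcompat subxx.
    rewrite /wcompat; apply/orP; left; by rewrite subUset !sub1set !inE iT eqxx orbT.
  apply/or3P; apply: Or33; rewrite disjoints_subset subUset !sub1set !inE iy.
  by rewrite (negbTE (vert_nomx (H1 _ yF))).
have mixed T1 T2 : T1 \in F -> T2 \in F -> i \in T1 -> i \notin T2 ->
    wcompat (T1 :|: [set mx]) T2.
  move=> t1 t2 s1 s2; apply: wcompat_Ul; first exact: vert_nomx (H1 _ t2).
    exact: H2.
  by apply/negP => /subsetP /(_ _ s1); apply/negP.
move=> x y /memE [->|[T1 [t1 s1] ->]|[t1 s1]].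
  exact: c0.
  move=> /memE [->|[T2 [t2 s2] ->]|[t2 s2]].
  - by rewrite wcompatC; apply: c0; apply: memEI.
  - apply: wcompat_UU; first by apply: H2.
    by rewrite -setI_eq0; apply/set0Pn; exists i; rewrite inE s1 s2.
  - exact: mixed.
move=> /memE [->|[T2 [t2 s2] ->]|[t2 s2]].
- by rewrite wcompatC; apply: c0; apply: memEI2.
- by rewrite wcompatC; apply: mixed.
- exact: H2.
Qed.

Lemma face_nomx (F : {set vset}) T : wface n F -> T \in F -> mx \notin T.
Proof. by case/wfaceP => H1 _ /H1 /vert_nomx. Qed.

Lemma i2D (i : 'I_n.+2) : i != mx -> [set i; mx] :\ mx = [set i].
Proof.
move=> im; apply/setP => x; rewrite !inE; case: (eqVneq x mx) => [->|xm] /=; first by rewrite eq_sym (negbTE im).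
by rewrite orbF.
Qed.

Lemma addinj (T1 T2 : vset) : mx \notin T1 -> mx \notin T2 ->
  T1 :|: [set mx] = T2 :|: [set mx] -> T1 = T2.
Proof. by move=> n1 n2 /(congr1 (fun X => X :\ mx)); rewrite !addK. Qed.

Lemma mxU (T : vset) : mx \in T :|: [set mx].
Proof. by rewrite !inE eqxx orbT. Qed.

Lemma injB (F1 F2 : {set vset}) : wface n F1 -> wface n F2 -> mapB F1 = mapB F2 -> F1 = F2.
Proof.
move=> w1 w2 /(congr1 (fun X => X :\ V0)); rewrite /mapB !(setUC _ [set V0]) !setU1K //;
 exact: V0notin.
Qed.

Lemma subC (F1 F2 : {set vset}) S : wface n F1 -> wface n F2 ->
  mapC F1 S \subset mapC F2 S -> F1 \subset F2.
Proof.
move=> w1 w2 /subsetP sub; apply/subsetP => T TF.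
have nT := face_nomx w1 TF.
case: (boolP (S \subset T)) => ST.
  case/memC: (sub _ (memCI TF ST)) => [[T' [T'F _] e]|[h _]].
    by rewrite (addinj nT (face_nomx w2 T'F) e).
  by have := face_nomx w2 h; rewrite mxU.
case/memC: (sub _ (memCI2 TF ST)) => [[T' _ e]|[h _]] //.
by move: nT; rewrite e mxU.
Qed.

Lemma SsubC (F1 F2 : {set vset}) S1 S2 : wface n F1 -> wface n F2 -> S1 \in F1 ->
  S1 :|: [set mx] \in mapC F2 S2 -> S2 \subset S1.
Proof.
move=> w1 w2 s1; case/memC => [[T [TF ST] e]|[h _]].
  by rewrite (addinj (face_nomx w1 s1) (face_nomx w2 TF) e).
by have := face_nomx w2 h; rewrite mxU.
Qed.

Lemma injC (F1 : {set vset}) (S1 : vset) F2 S2 : wface n F1 -> S1 \in F1 -> wface n F2 -> S2 \in F2 ->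
          mapC F1 S1 = mapC F2 S2 -> F1 = F2 /\ S1 = S2.
Proof.
move=> w1 s1 w2 s2 e.
have e12 : S1 = S2.
  apply/eqP; rewrite eqEsubset; apply/andP; split.
    by apply: (SsubC w2 w1 s2); rewrite e; apply: memCI.
  by apply: (SsubC w1 w2 s1); rewrite -e; apply: memCI.
subst S2; split => //; apply/eqP; rewrite eqEsubset; apply/andP; split.
  by apply: (subC (S := S1)) => //; rewrite e.
by apply: (subC (S := S1)) => //; rewrite e.
Qed.

Lemma SnotinC (F : {set vset}) S : wface n F -> S \in F -> S \notin mapC F S.
Proof.
move=> w sF; apply/negP; case/memC => [[T _ e]|[_ /negP []//]].
by have := face_nomx w sF; rewrite e mxU.
Qed.

Lemma injD (F1 : {set vset}) (S1 : vset) F2 S2 : wface n F1 -> S1 \in F1 -> wface n F2 -> S2 \in F2 ->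
          mapD F1 S1 = mapD F2 S2 -> F1 = F2 /\ S1 = S2.
Proof.
move=> w1 s1 w2 s2 e.
have sub12 (Fa Fb : {set vset}) Sa Sb : wface n Fa -> Sa \in Fa -> wface n Fb -> Sb \in Fb ->
    mapD Fa Sa = mapD Fb Sb -> Sb \subset Sa.
  move=> wa sa wb sb ee.
  have : Sa :|: [set mx] \in mapD Fb Sb by rewrite -ee /mapD in_setU (memCI sa).
  rewrite /mapD => /setUP [|/set1P ee2]; first exact: (SsubC wa wb sa).
  by have := face_nomx wb sb; rewrite -ee2 mxU.
have e12 : S1 = S2.
  by apply/eqP; rewrite eqEsubset; rewrite (sub12 _ _ _ _ w2 s2 w1 s1) ?(sub12 _ _ _ _ w1 s1 w2 s2).
subst S2; apply: injC => //.
move: e => /(congr1 (fun X => X :\ S1)); rewrite /mapD !(setUC _ [set S1]) !setU1K //;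
 exact: SnotinC.
Qed.

Lemma subE (F1 F2 : {set vset}) (i : 'I_n.+2) : wface n F1 -> wface n F2 -> 2 <= i <= n ->
  (F1 \subset F2) = (mapE F1 i \subset mapE F2 i).
Proof.
move=> w1 w2 hi; apply/idP/idP => /subsetP sub; apply/subsetP.
  move=> x /memE [->|[T [TF iT] ->]|[xF ix]].
  - exact: memEI0.
  - by apply: memEI => //; apply: sub.
  - by apply: memEI2 => //; apply: sub.
move=> T TF; have nT := face_nomx w1 TF.
have im : i != mx by rewrite -val_eqE /=; lia.
case: (boolP (i \in T)) => iT.
  case/memE: (sub _ (memEI TF iT)) => [e|[T' [T'F _] e]|[h _]].
  - case/wfaceP: w1 => H1 _; case/wvertP: (H1 _ TF) => _.
    have : T = [set i] by rewrite -(addK nT) e i2D.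
    by move=> -> ; rewrite cards1.
  - by rewrite (addinj nT (face_nomx w2 T'F) e).
  - by have := face_nomx w2 h; rewrite mxU.
case/memE: (sub _ (memEI2 TF iT)) => [e|[T' _ e]|[h _]] //.
- by move: nT; rewrite e !inE eqxx orbT.
- by move: nT; rewrite e mxU.
Qed.

Lemma injE (F1 : {set vset}) (i1 : 'I_n.+2) F2 (i2 : 'I_n.+2) :
          wface n F1 -> 2 <= i1 <= n -> wface n F2 -> 2 <= i2 <= n ->
          mapE F1 i1 = mapE F2 i2 -> F1 = F2 /\ i1 = i2.
Proof.
move=> w1 h1 w2 h2 e.
have ei : i1 = i2.
  have : [set i1; mx] \in mapE F2 i2 by rewrite -e memEI0.
  case/memE => [ee|[T [TF _] ee]|[h _]].
  - have : i1 \in [set i2; mx] by rewrite -ee !inE eqxx.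
    rewrite !inE => /orP [/eqP //|/eqP ee2]; by move: h1; rewrite ee2 /=; lia.
  - have nT := face_nomx w2 TF.
    have : T = [set i1] by rewrite -(addK nT) -ee i2D // -val_eqE /=; lia.
    case/wfaceP: w2 => H1 _; case/wvertP: (H1 _ TF) => _.
    by move=> c e'; move: c; rewrite e' cards1.
  - by have := face_nomx w2 h; rewrite !inE eqxx orbT.
subst i2; split => //; apply/eqP; rewrite eqEsubset.
by rewrite (subE (i:=i1) w1 w2 h1) (subE (i:=i1) w2 w1 h1) e subxx.
Qed.

Lemma delnot (T : vset) : mx \notin T -> T :\ mx = T.
Proof. by move=> nT; apply/setP => x; rewrite !inE; case: eqVneq => // ->; rewrite (negbTE nT). Qed.

Lemma memC_iff (F : {set vset}) (S : vset) x : wface n F ->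
  (x \in mapC F S) = if mx \in x then (x :\ mx \in F) && (S \subset x :\ mx)
                     else (x \in F) && ~~ (S \subset x).
Proof.
move=> w; apply/idP/idP.
  case/memC => [[T [TF ST] ->]|[xF sx]]; first by rewrite mxU addK ?TF ?ST // (face_nomx w TF).
  by rewrite (negbTE (face_nomx w xF)) xF sx.
case: ifP => mxx /andP [a b]; last exact: memCI2.
by rewrite -(delK mxx); apply: memCI.
Qed.

Lemma memE_iff (F : {set vset}) (i : 'I_n.+2) x : wface n F -> i != mx ->
  (x \in mapE F i) = (x == [set i; mx]) || if mx \in x then (x :\ mx \in F) && (i \in x)
                     else (x \in F) && (i \notin x).
Proof.
move=> w im; apply/idP/idP.
  case/memE => [->|[T [TF iT] ->]|[xF ix]]; first by rewrite eqxx.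
    by rewrite mxU addK ?TF ?(face_nomx w TF) // !inE iT orbT.
  by rewrite (negbTE (face_nomx w xF)) xF ix orbT.
case/orP => [/eqP ->|]; first exact: memEI0.
case: ifP => mxx /andP [a b]; last exact: memEI2.
rewrite -(delK mxx); apply: memEI => //; by rewrite !inE b andbT.
Qed.

Definition hasmx (G : {set vset}) := [exists x in G, mx \in x].

Lemma noMxA (F : {set vset}) : wface n F -> ~~ hasmx (mapA F).
Proof. by move=> w; apply/existsP => [[x /andP [xF]]]; apply/negP; apply: face_nomx w xF. Qed.

Lemma noMxB (F : {set vset}) : wface n F -> ~~ hasmx (mapB F).
Proof.
move=> w; apply/existsP => [[x /andP [/setUP [xF|/set1P ->]]]]; first by apply/negP; apply: face_nomx w xF.
by rewrite inE /=; lia.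
Qed.

Lemma MxC (F : {set vset}) S : S \in F -> hasmx (mapC F S).
Proof. by move=> sF; apply/existsP; exists (S :|: [set mx]); rewrite memCI ?mxU. Qed.

Lemma MxD (F : {set vset}) S : S \in F -> hasmx (mapD F S).
Proof. by move=> sF; apply/existsP; exists (S :|: [set mx]); rewrite /mapD in_setU memCI ?mxU. Qed.

Lemma MxE (F : {set vset}) (i : 'I_n.+2) : hasmx (mapE F i).
Proof. by apply/existsP; exists [set i; mx]; rewrite memEI0 !inE eqxx orbT. Qed.

Lemma i2notC (F : {set vset}) S (i : 'I_n.+2) : wface n F -> 2 <= i <= n ->
  [set i; mx] \notin mapC F S.
Proof.
move=> w hi; apply/negP; case/memC => [[T [TF _] ee]|[h _]].
  have nT := face_nomx w TF.
  have : T = [set i] by rewrite -(addK nT) -ee i2D // -val_eqE /=; lia.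
  case/wfaceP: w => H1 _; case/wvertP: (H1 _ TF) => _.
  by move=> c e'; move: c; rewrite e' cards1.
by have := face_nomx w h; rewrite !inE eqxx orbT.
Qed.

Lemma disjAB (F1 F2 : {set vset}) : wface n F1 -> wface n F2 -> mapA F1 <> mapB F2.
Proof. move=> w1 w2 e; have := V0notin w1; by rewrite -[F1]/(mapA F1) e /mapB !inE eqxx orbT. Qed.

Lemma disjCD (F1 F2 : {set vset}) S1 S2 : wface n F1 -> S1 \in F1 -> wface n F2 -> S2 \in F2 ->
  mapC F1 S1 <> mapD F2 S2.
Proof.
move=> w1 s1 w2 s2 e.
have sub : S1 \subset S2.
  by apply: (SsubC w2 w1 s2); rewrite e /mapD in_setU memCI.
have : S2 \in mapC F1 S1 by rewrite e /mapD in_setU set11 orbT.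
case/memC => [[T _ ee]|[_ /negP []//]].
by have := face_nomx w2 s2; rewrite ee mxU.
Qed.

Lemma disjCE (F1 F2 : {set vset}) S1 (i : 'I_n.+2) : wface n F1 -> 2 <= i <= n ->
  mapC F1 S1 <> mapE F2 i.
Proof. move=> w1 hi e; have := i2notC S1 w1 hi; by rewrite e memEI0. Qed.

Lemma disjDE (F1 F2 : {set vset}) S1 (i : 'I_n.+2) : wface n F1 -> S1 \in F1 -> 2 <= i <= n ->
  mapD F1 S1 <> mapE F2 i.
Proof.
move=> w1 s1 hi e; have : [set i; mx] \in mapD F1 S1 by rewrite e memEI0.
case/setUP => [|/set1P ee]; first by apply/negP; apply: i2notC.
by have := face_nomx w1 s1; rewrite -ee !inE eqxx orbT.
Qed.
Section Decomp.
Variable G : {set vset}.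
Hypothesis wG : wface n.+1 G.

Lemma GV x : x \in G -> wvert n.+1 x.
Proof. by case/wfaceP: wG => H1 _; apply: H1. Qed.
Lemma GC x y : x \in G -> y \in G -> wcompat x y.
Proof. by case/wfaceP: wG => _ H2; apply: H2. Qed.

Lemma elemsD x y : x \in G -> y \in x :\ mx -> 2 <= y <= n.
Proof.
move=> /GV /wvertP [H _]; rewrite !inE => /andP [ym /H].
by move: ym; rewrite -val_eqE /=; lia.
Qed.

Lemma subV0 x : x \in G -> x :\ mx \subset V0.
Proof. by move=> xG; apply/subsetP => y /(elemsD xG); rewrite inE. Qed.

Lemma vert_down x : x \in G -> mx \notin x -> x != V0 -> wvert n x.
Proof.
move=> xG nx xV; apply/wvertP; split.
  by move=> y yx; apply: (elemsD xG); rewrite delnot.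
have sub := subV0 xG; rewrite delnot // in sub.
have : x \proper V0 by rewrite properEneq xV sub.
move/proper_card; rewrite cardV0 //.
case/wvertP: (GV xG) => _; lia.
Qed.

Lemma decomp_nomx : ~~ hasmx G -> exists l, @inImage n l G.
Proof.
move=> nh.
have nx x : x \in G -> mx \notin x.
  by move=> xG; apply/negP => mxx; move/negP: nh; apply; apply/existsP; exists x; rewrite xG.
case: (boolP (V0 \in G)) => V0G.
  exists LB; exists (G :\ V0); split.
    apply/wfaceP; split.
      by move=> S; rewrite !inE => /andP [SV SG]; apply: vert_down => //; apply: nx.
    by move=> S T; rewrite !inE => /andP [_ SG] /andP [_ TG]; apply: GC.
  by rewrite /mapB setUC setD1K.
exists LA; exists G; split => //.
apply/wfaceP; split; last exact: GC.
move=> S SG; apply: vert_down => //; first exact: nx.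
by apply/negP => /eqP e; rewrite -e SG in V0G.
Qed.

Section HasMx.
Hypothesis hm : hasmx G.

Let P := fun T : vset => (T \in G) && (mx \in T).
Let T0 : vset := [set mx].
Let x0 : vset := odflt T0 [pick T | P T].
Definition M0 := [arg min_(T < x0 | P T) #|T|].

Lemma M0spec : [/\ M0 \in G, mx \in M0 & forall T, T \in G -> mx \in T -> #|M0| <= #|T|].
Proof.
case/existsP: hm => x /andP [xG mxx].
have Px0 : P x0.
  by rewrite /x0; case: pickP => [//|/(_ x)]; rewrite /P xG mxx.
rewrite /M0; case: arg_minnP; first exact: Px0.
move=> M /andP [MG mM] Hmin; split => // T TG mT; apply: Hmin; by rewrite /P TG mT.
Qed.

Lemma MG : M0 \in G. Proof. by case: M0spec. Qed.
Lemma mM : mx \in M0. Proof. by case: M0spec. Qed.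

Lemma minM T : T \in G -> mx \in T -> M0 \subset T.
Proof.
move=> TG mT; case: M0spec => _ _ Hm; have := Hm _ TG mT.
case/or3P: (GC MG TG) => // [sub|dj] c.
  by have /eqP -> : T == M0 by rewrite eqEcard sub c.
by move: dj; rewrite -setI_eq0 => /eqP/setP/(_ mx); rewrite !inE mM mT.
Qed.

Local Notation S' := (M0 :\ mx).

Lemma cardS' : #|M0| = #|S'|.+1.
Proof. by rewrite (cardsD1 mx M0) mM. Qed.

Lemma S'ne : S' != set0.
Proof. rewrite -card_gt0; case/wvertP: (GV MG) => _; rewrite cardS'; lia. Qed.

Lemma keyA x : x \in G -> mx \notin x -> S' \subset x -> x = S'.
Proof.
move=> xG nx sx; case/or3P: (GC xG MG) => [sub|sub|dj].
- apply/eqP; rewrite eqEsubset sx andbT; apply/subsetP => y yx.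
  by rewrite !inE (subsetP sub _ yx) andbT; apply: contraNneq nx => <-.
- by move: nx; rewrite (subsetP sub _ mM).
- case/set0Pn: S'ne => y yS; move: dj; rewrite -setI_eq0 => /eqP/setP/(_ y).
  by rewrite !inE (subsetP sx _ yS); move: yS; rewrite !inE => /andP [_ ->].
Qed.

Definition F0 := [set T :\ mx | T in G].

Lemma F0I T : T \in G -> T :\ mx \in F0.
Proof. by move=> TG; apply/imsetP; exists T. Qed.

Lemma charG x : x \in G = if mx \in x then (x :\ mx \in F0) && (S' \subset x :\ mx)
   else ((x \in F0) && ~~ (S' \subset x)) || ((x == S') && (S' \in G)).
Proof.
case: ifP => mxx; apply/idP/idP.
- by move=> xG; rewrite F0I //=; apply: setSD; apply: minM.
- case/andP => /imsetP [T TG ee] sub.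
  case: (boolP (mx \in T)) => mT.
    by rewrite -(delK mxx) ee delK.
  rewrite (delnot mT) in ee; rewrite ee in sub.
  have eT := keyA TG mT sub.
  by rewrite -(delK mxx) ee eT delK ?mM ?MG.
- move=> xG; case: (boolP (S' \subset x)) => sx.
    by have e := keyA xG (negbT mxx) sx; rewrite e in xG *; rewrite xG eqxx orbT.
  by rewrite -{1}(delnot (negbT mxx)) F0I.
- case/orP => [/andP [/imsetP [T TG ee] ns]|/andP [/eqP -> //]].
  case: (boolP (mx \in T)) => mT.
    by move: ns; rewrite ee; have := minM TG mT => sub; rewrite (setSD _ sub).
  by rewrite ee delnot.
Qed.

Lemma V0notG : V0 \notin G.
Proof.
apply/negP => VG; case/or3P: (GC VG MG) => [sub|sub|dj].
- have : V0 \subset S' by apply/subsetP => y yV; rewrite !inE (subsetP sub _ yV) andbT; move: yV; rewrite inE -val_eqE /=; lia.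
  move=> X; have c : #|V0| <= #|S'| := subset_leq_card X.
  move: c; rewrite cardV0 //; case/wvertP: (GV MG) => _; rewrite cardS' -subn1; lia.
- by move: (subsetP sub _ mM); rewrite inE /=; lia.
- case/set0Pn: S'ne => y yS; move: dj; rewrite -setI_eq0 => /eqP/setP/(_ y).
  rewrite !inE; move: (subsetP (subV0 MG) _ yS); rewrite inE => ->.
  by move: yS; rewrite !inE => /andP [_ ->].
Qed.

Lemma F0elems y z : y \in F0 -> z \in y -> 2 <= z <= n.
Proof. by case/imsetP => T TG -> /(elemsD TG). Qed.

Lemma F0card_hi y : y \in F0 -> #|y| <= n - 2.
Proof.
case/imsetP => T TG ->; case: (boolP (mx \in T)) => mT.
  move: (GV TG) => /wvertP [_]; rewrite (cardsD1 mx T) mT; lia.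
rewrite delnot //; have sub := subV0 TG; rewrite delnot // in sub.
have : T != V0 by apply: contraNneq V0notG => <-.
move=> TV; have : T \proper V0 by rewrite properEneq TV sub.
move/proper_card; rewrite cardV0 //; lia.
Qed.

Lemma F0card_lo y : y \in F0 -> y != S' -> 2 <= #|y|.
Proof.
case/imsetP => T TG -> ne; case: (boolP (mx \in T)) => mT.
  have sub : S' \subset T :\ mx by apply: setSD; apply: minM.
  have : S' \proper T :\ mx by rewrite properEneq eq_sym ne sub.
  move=> X; have c : #|S'| < #|T :\ mx| := proper_card X.
  move: c; have := S'ne; rewrite -card_gt0; lia.
by case/wvertP: (GV TG) => _; rewrite delnot // => /andP [].
Qed.

Lemma F0compat y z : y \in F0 -> z \in F0 -> wcompat y z.
Proof. by case/imsetP => T TG -> /imsetP [U UG ->]; apply: wcompatD; apply: GC. Qed.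

Lemma S'F0 : S' \in F0.
Proof. exact: F0I MG. Qed.

Lemma F0nomx y : y \in F0 -> mx \notin y.
Proof. by case/imsetP => T _ ->; rewrite !inE eqxx. Qed.

Lemma decomp_mx : exists l, @inImage n l G.
Proof.
have S'nmx : mx \notin S' by rewrite !inE eqxx.
case: (ltnP 1 #|S'|) => cS.
  have wF : wface n F0.
    apply/wfaceP; split; last exact: F0compat.
    move=> y yF; apply/wvertP; split; first by move=> z; apply: F0elems.
    rewrite F0card_hi // andbT; case: (eqVneq y S') => [->|ne] //; exact: F0card_lo.
  case: (boolP (S' \in G)) => S'G.
    exists LD; exists F0, S'; split => //; first exact: S'F0.
    apply/setP => x; rewrite charG /mapD in_setU in_set1 (@memC_iff F0 S' x wF).
    case: ifP => mxx; first by case: (eqVneq x S') => [ee|]; [move: S'nmx; rewrite -ee mxx|rewrite orbF].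
    by rewrite S'G andbT.
  exists LC; exists F0, S'; split => //; first exact: S'F0.
  apply/setP => x; rewrite charG (@memC_iff F0 S' x wF).
  by case: ifP => mxx //; rewrite (negbTE S'G) andbF orbF.
have c1 : #|S'| = 1 by have := S'ne; rewrite -card_gt0; lia.
have c1b : #|S'| == 1 by rewrite c1.
case/cards1P: c1b => i ei.
have iS : i \in S' by rewrite ei set11.
have iM : i \in M0 by move: iS; rewrite inE => /andP [? ?].
have im : i != mx by apply: contraTneq iS => ->; rewrite !inE eqxx.
have hi : 2 <= i <= n by apply: (F0elems S'F0); rewrite ei set11.
have eM : M0 = [set i; mx] by rewrite -(delK mM) ei.
have wF : wface n (F0 :\ [set i]).
  apply/wfaceP; split; last by move=> y z /setD1P [_ yF] /setD1P [_ zF]; apply: F0compat.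
  move=> y /setD1P [yi yF]; apply/wvertP; split; first by move=> z; apply: F0elems.
  by rewrite F0card_hi // andbT F0card_lo // ei.
exists LE; exists (F0 :\ [set i]), i; split => //.
apply/setP => x; rewrite charG (@memE_iff (F0 :\ [set i]) i x wF im) ei.
have iSx : ([set i] \subset x) = (i \in x) by rewrite sub1set.
case: ifP => mxx.
  rewrite sub1set !inE im /=.
  case: (eqVneq x [set i; mx]) => [ex|nex] /=.
    by rewrite ex -eM (F0I MG) iM.
  have : x :\ mx != [set i] by apply: contraNneq nex => <-; rewrite delK.
  move=> ne; rewrite ne /=; by rewrite andbC.
have nex : x != [set i; mx] by apply: contraFneq mxx => ->; rewrite !inE eqxx orbT.
rewrite (negbTE nex) /= iSx !inE.
case: (eqVneq x [set i]) => [->|nxi] /=; last by rewrite orbF.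
rewrite set11 /= andbF /=; apply/negbTE/negP => /GV /wvertP [_].
by rewrite cards1.
Qed.

End HasMx.

Lemma decomp : exists l, @inImage n l G.
Proof. by case: (boolP (hasmx G)) => h; [apply: decomp_mx|apply: decomp_nomx]. Qed.

End Decomp.

Lemma i2E (F : {set vset}) (i j : 'I_n.+2) : wface n F -> 2 <= i <= n ->
  [set i; mx] \in mapE F j -> i = j.
Proof.
move=> w h1; case/memE => [ee|[T [TF _] ee]|[h _]].
- have : i \in [set j; mx] by rewrite -ee !inE eqxx.
  rewrite !inE => /orP [/eqP //|/eqP ee2]; by move: h1; rewrite ee2 /=; lia.
- have nT := face_nomx w TF.
  have : T = [set i] by rewrite -(addK nT) -ee i2D // -val_eqE /=; lia.
  case/wfaceP: w => H1 _; case/wvertP: (H1 _ TF) => _.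
  by move=> c e'; move: c; rewrite e' cards1.
- by have := face_nomx w h; rewrite !inE eqxx orbT.
Qed.

Definition isCDE l := match l with LA | LB => false | _ => true end.

Lemma hasmx_img l (G : {set vset}) : @inImage n l G -> hasmx G = isCDE l.
Proof.
case: l => /=.
- by case=> F [w ->]; apply/negbTE; apply: noMxA.
- by case=> F [w ->]; apply/negbTE; apply: noMxB.
- by case=> F [S [w s ->]]; apply: MxC.
- by case=> F [S [w s ->]]; apply: MxD.
- by case=> F [i [w h ->]]; apply: MxE.
Qed.

Lemma imgE_iff (i : 'I_n.+2) : 2 <= i <= n ->
  forall G, imgE i G <-> (wface n.+1 G /\ [set i; mx] \in G).
Proof.
move=> hi G; split.
  by case=> F [w ->]; split; [apply: faceE|apply: memEI0].
case=> wG iG; case: (decomp wG) => l h.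
have hm : hasmx G by apply/existsP; exists [set i; mx]; rewrite iG !inE eqxx orbT.
case: l h (hasmx_img h) => /= h e; try by rewrite hm in e.
- case: h => F [S [w s eG]]; exfalso; move: iG; rewrite eG; apply/negP; exact: i2notC.
- case: h => F [S [w s eG]]; exfalso; move: iG; rewrite eG => /setUP [|/set1P ee].
    by apply/negP; apply: i2notC.
  by have := face_nomx w s; rewrite -ee !inE eqxx orbT.
- case: h => F [j [w hj eG]]; exists F; split => //.
  by rewrite eG (i2E w hi (_ : [set i; mx] \in mapE F j)) // -eG.
Qed.

Lemma main_sec :
  [/\ (forall F1 F2 : {set {set 'I_n.+2}}, wface n F1 -> wface n F2 -> mapA F1 = mapA F2 -> F1 = F2),
      (forall F1 F2 : {set {set 'I_n.+2}}, wface n F1 -> wface n F2 -> mapB F1 = mapB F2 -> F1 = F2),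
      (forall (F1 : {set {set 'I_n.+2}}) (S1 : {set 'I_n.+2}) F2 S2, wface n F1 -> S1 \in F1 -> wface n F2 -> S2 \in F2 ->
          mapC F1 S1 = mapC F2 S2 -> F1 = F2 /\ S1 = S2),
      (forall (F1 : {set {set 'I_n.+2}}) (S1 : {set 'I_n.+2}) F2 S2, wface n F1 -> S1 \in F1 -> wface n F2 -> S2 \in F2 ->
          mapD F1 S1 = mapD F2 S2 -> F1 = F2 /\ S1 = S2) &
      (forall (F1 : {set {set 'I_n.+2}}) (i1 : 'I_n.+2) F2 (i2 : 'I_n.+2),
          wface n F1 -> 2 <= i1 <= n -> wface n F2 -> 2 <= i2 <= n ->
          mapE F1 i1 = mapE F2 i2 -> F1 = F2 /\ i1 = i2)]
  /\
  (forall l G, @inImage n l G -> wface n.+1 G)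
  /\
  (forall G : {set {set 'I_n.+2}}, wface n.+1 G -> exists l, @inImage n l G)
  /\
  (forall l1 l2 G, @inImage n l1 G -> @inImage n l2 G -> l1 = l2)
  /\
  (forall i : 'I_n.+2, 2 <= i <= n ->
     (forall G, imgE i G <-> (wface n.+1 G /\ [set i; ord_max] \in G))
     /\
     (exists phi : {set {set 'I_n.+2}} -> {set {set 'I_n.+2}},
        [/\ (forall F : {set {set 'I_n.+2}}, wface n F -> imgE i (phi F)),
            (forall G, imgE i G -> exists F, wface n F /\ phi F = G) &
            (forall F1 F2 : {set {set 'I_n.+2}}, wface n F1 -> wface n F2 ->
               (F1 \subset F2) = (phi F1 \subset phi F2))])
     /\
     (forall G H, imgE i G -> wface n.+1 H -> G \subset H -> imgE i H)).
Proof.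
split.
  split.
  - by move=> F1 F2 _ _.
  - exact: injB.
  - exact: injC.
  - exact: injD.
  - exact: injE.
split.
  case=> G /=.
  - by case=> F [w ->]; apply: faceA.
  - by case=> F [w ->]; apply: faceB.
  - by case=> F [S [w s ->]]; apply: faceC.
  - by case=> F [S [w s ->]]; apply: faceD.
  - by case=> F [i [w h ->]]; apply: faceE.
split.
  by move=> G wG; apply: decomp.
split.
  move=> l1 l2 G h1 h2.
  have e := hasmx_img h1; rewrite (hasmx_img h2) in e.
  case: l1 h1 e; case: l2 h2 => /= h2 h1 e //; try discriminate e; exfalso;
  repeat match goal with
    | H : exists _, _ |- _ => destruct H
    | H : _ /\ _ |- _ => destruct H
    | H : [/\ _, _ & _] |- _ => destruct H
  end;
  match goal with E1 : G = ?a, E2 : G = ?b |- _ =>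
    have E : a = b by rewrite -E1 -E2 end;
  first [ apply: (disjAB _ _ E) | apply: (disjAB _ _ (esym E))
        | apply: (disjCD _ _ _ _ E) | apply: (disjCD _ _ _ _ (esym E))
        | apply: (disjCE _ _ E) | apply: (disjCE _ _ (esym E))
        | apply: (disjDE _ _ _ E) | apply: (disjDE _ _ _ (esym E)) ]; assumption.
move=> i hi; split; first exact: imgE_iff.
split.
  exists (fun F => mapE F i); split.
  - by move=> F w; exists F.
  - by move=> G [F [w ->]]; exists F.
  - by move=> F1 F2 w1 w2; apply: subE.
move=> G H hG wH sub.
case/(imgE_iff hi): hG => _ iG.
by apply/(imgE_iff hi); split => //; apply: (subsetP sub).
Qed.
End Main.

Theorem mainTheorem4 (n : nat) (hn : 3 <= n) :
  (* injectivity *)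
  [/\ (forall F1 F2 : {set {set 'I_n.+2}}, wface n F1 -> wface n F2 -> mapA F1 = mapA F2 -> F1 = F2),
      (forall F1 F2 : {set {set 'I_n.+2}}, wface n F1 -> wface n F2 -> mapB F1 = mapB F2 -> F1 = F2),
      (forall (F1 : {set {set 'I_n.+2}}) (S1 : {set 'I_n.+2}) F2 S2, wface n F1 -> S1 \in F1 -> wface n F2 -> S2 \in F2 ->
          mapC F1 S1 = mapC F2 S2 -> F1 = F2 /\ S1 = S2),
      (forall (F1 : {set {set 'I_n.+2}}) (S1 : {set 'I_n.+2}) F2 S2, wface n F1 -> S1 \in F1 -> wface n F2 -> S2 \in F2 ->
          mapD F1 S1 = mapD F2 S2 -> F1 = F2 /\ S1 = S2) &
      (forall (F1 : {set {set 'I_n.+2}}) (i1 : 'I_n.+2) F2 (i2 : 'I_n.+2),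
          wface n F1 -> 2 <= i1 <= n -> wface n F2 -> 2 <= i2 <= n ->
          mapE F1 i1 = mapE F2 i2 -> F1 = F2 /\ i1 = i2)]
  /\
  (* images are faces of Delta_{n+1} *)
  (forall l G, @inImage n l G -> wface n.+1 G)
  /\
  (* every face of Delta_{n+1} lies in one of the images ... *)
  (forall G : {set {set 'I_n.+2}}, wface n.+1 G -> exists l, @inImage n l G)
  /\
  (* ... and the images are pairwise disjoint *)
  (forall l1 l2 G, @inImage n l1 G -> @inImage n l2 G -> l1 = l2)
  /\
  (forall i : 'I_n.+2, 2 <= i <= n ->
     (* image of E(-,i) = faces of Delta_{n+1} containing the vertex {i,n+1} *)
     (forall G, imgE i G <-> (wface n.+1 G /\ [set i; ord_max] \in G))
     /\
     (* poset isomorphism with the face poset of Delta_n *)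
     (exists phi : {set {set 'I_n.+2}} -> {set {set 'I_n.+2}},
        [/\ (forall F : {set {set 'I_n.+2}}, wface n F -> imgE i (phi F)),
            (forall G, imgE i G -> exists F, wface n F /\ phi F = G) &
            (forall F1 F2 : {set {set 'I_n.+2}}, wface n F1 -> wface n F2 ->
               (F1 \subset F2) = (phi F1 \subset phi F2))])
     /\
     (* upper order ideal in the face poset of Delta_{n+1} *)
     (forall G H, imgE i G -> wface n.+1 H -> G \subset H -> imgE i H)).
Proof. exact: main_sec. Qed.
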